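(* Let the theory be one of the following: quantum many-worlds theory, unnormalised quantum many-worlds theory, or stochastic many-worlds theory. Let $p$ be a probability rule for that theory satisfying Axioms (A1)–(A3). Let $v=\sum_{n=0}^{N-1}v_n\lvert n\rangle$ be an allowed bounded state with $|v_l|>|v_k|$ for some indices $l,k$. Then $p_l(v)\ge p_k(v)$.
   Context: A linear many-worlds theory consists of the following data. The worlds are the vectors $\lvert n\rangle$, $n\in\{0,1,2,\dots\}$, of a countably infinite orthonormal basis of a real or complex vector space. A state is a vector $v=\sum_n v_n\lvert n\rangle$, and $v_n=\langle n\vert v\rangle$ is the amplitude of world $n$. A transformation is a linear operator $T$ with matrix elements $T_{ij}=\langle i\rvert T\lvert j\rangle$, acting by $v\mapsto Tv$. A theory specifies a set of allowed states and a set of allowed transformations, and every allowed transformation maps allowed states to allowed states. A state is bounded if only finitely many of its amplitudes are nonzero. The three theories are: - Quantum many-worlds theory: the allowed states are complex vectors with $\langle v\vert v\rangle=\sum_n|v_n|^2=1$, and the allowed transformations are all unitary operators. - Unnormalised quantum many-worlds theory: the allowed states are complex vectors with $0<\sum_n|v_n|^2<\infty$, and the allowed transformations are all unitary operators. - Stochastic many-worlds theory: the allowed states are real vectors with $v_n\ge0$ for all $n$ and $\sum_n v_n=1$, and the allowed transformations are the $T$ with $T_{ij}\ge0$ for all $i,j$ and $\sum_i T_{ij}=1$ for all $j$. A probability rule assigns to each allowed state $v$ a sequence $(p_n(v))_{n\ge 0}$ of nonnegative reals with $\sum_n p_n(v)=1$. The axioms are: (A1) Present state dependence: $p_n$ depends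 only on the present state $v$, so $p$ is a function of the state alone. (A2) Weak connection with amplitudes: for every allowed state $v$, $v_n=0$ implies $p_n(v)=0$. (A3) Weak connection with transformations: for every allowed state $v$ and allowed transformation $T$, and every partition of $\{0,1,2,\dots\}$ into subsets $\mathcal S_k$ such that $T_{ij}=0$ whenever $i$ and $j$ lie in different subsets, we have $\sum_{n\in\mathcal S_k}p_n(v)=\sum_{n\in\mathcal S_k}p_n(Tv)$ for every $k$. *)

(* Defs.v *)
From Stdlib Require Import Reals Arith.
From Coquelicot Require Import Coquelicot.
Open Scope R_scope.

Inductive theory := Quantum | UnnormQuantum | Stochastic.

(* A vector: its amplitudes v_n = <n|v>. Real vectors (stochastic theory)
   are complex vectors with zero imaginary parts. *)
Definition state := nat -> C.
(* A linear operator via its matrix elements T i j = <i|T|j>. *)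
Definition operator := nat -> nat -> C.

Definition kdelta (i j : nat) : C := if Nat.eqb i j then RtoC 1 else RtoC 0.

Definition is_real_vec (v : state) : Prop := forall n, Im (v n) = 0.

Definition allowed_state (th : theory) (v : state) : Prop :=
  match th with
  | Quantum => is_series (fun n => (Cmod (v n)) ^ 2) 1
  | UnnormQuantum => exists s, 0 < s /\ is_series (fun n => (Cmod (v n)) ^ 2) s
  | Stochastic =>
      (forall n, Im (v n) = 0 /\ 0 <= Re (v n)) /\ is_series (fun n => Re (v n)) 1
  end.

Definition unitary (T : operator) : Prop :=
  (forall j k, is_series (fun i => Cmult (Cconj (T i j)) (T i k)) (kdelta j k)) /\
  (forall i k, is_series (fun j => Cmult (T i j) (Cconj (T k j))) (kdelta i k)).

Definition stochastic_op (T : operator) : Prop :=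
  (forall i j, Im (T i j) = 0 /\ 0 <= Re (T i j)) /\
  (forall j, is_series (fun i => Re (T i j)) 1).

Definition allowed_trans (th : theory) (T : operator) : Prop :=
  match th with
  | Quantum | UnnormQuantum => unitary T
  | Stochastic => stochastic_op T
  end.

Definition acts (T : operator) (v w : state) : Prop :=
  forall i, is_series (fun j => Cmult (T i j) (v j)) (w i).

(* A probability rule: p v is a probability sequence for each allowed state.
   Axiom (A1) is built in: p is a function of the present state alone. *)
Definition prob_rule (th : theory) (p : state -> nat -> R) : Prop :=
  forall v, allowed_state th v ->
    (forall n, 0 <= p v n) /\ is_series (p v) 1.

Definition axiom_A2 (th : theory) (p : state -> nat -> R) : Prop :=
  forall v, allowed_state th v -> forall n, v n = RtoC 0 -> p v n = 0.

Definition block_sum (q : nat -> R) (blk : nat -> nat) (k : nat) : R :=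
  Series (fun n => if Nat.eqb (blk n) k then q n else 0).

(* (A3) weak connection with transformations. A partition of nat into
   (countably many) subsets S_k is given by a labelling blk : nat -> nat,
   S_k = { n | blk n = k }. *)
Definition axiom_A3 (th : theory) (p : state -> nat -> R) : Prop :=
  forall (v w : state) (T : operator),
    allowed_state th v -> allowed_trans th T -> acts T v w ->
    forall blk : nat -> nat,
      (forall i j, blk i <> blk j -> T i j = RtoC 0) ->
      forall k, block_sum (p v) blk k = block_sum (p w) blk k.

Definition bounded_state (v : state) : Prop :=
  exists N, forall n, (N <= n)%nat -> v n = RtoC 0.

(* Main.v *)
Require Import Defs.
From Stdlib Require Import Reals Lra Lia Arith FunctionalExtensionality.
From Coquelicot Require Import Coquelicot.
Open Scope R_scope.

Section Ser.
Context {K : AbsRing} {V : NormedModule K}.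

Lemma is_series_pt (f : nat -> V) (a : nat) :
  (forall n, n <> a -> f n = zero) -> is_series f (f a).
Proof.
  intros H. unfold is_series.
  assert (Hlo : forall n, (n < a)%nat -> sum_n f n = zero).
  { induction n; intros Hn.
    - rewrite sum_O. apply H. lia.
    - rewrite sum_Sn, IHn by lia. rewrite H by lia. apply plus_zero_l. }
  assert (Hhi : forall n, (a <= n)%nat -> sum_n f n = f a).
  { induction n; intros Hn.
    - assert (a = 0%nat) by lia. subst. apply sum_O.
    - destruct (Nat.eq_dec a (S n)) as [E|E].
      + subst. rewrite sum_Sn, Hlo by lia. apply plus_zero_l.
      + rewrite sum_Sn, IHn by lia. rewrite (H (S n)) by lia. apply plus_zero_r. }
  eapply filterlim_ext_loc; [| apply filterlim_const].
  exists a. intros n Hn. symmetry. apply Hhi. exact Hn.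
Qed.

Lemma is_series_two (f : nat -> V) (a b : nat) :
  a <> b -> (forall n, n <> a -> n <> b -> f n = zero) -> is_series f (plus (f a) (f b)).
Proof.
  intros Hab H.
  set (f1 := fun n => if Nat.eqb n a then f n else zero).
  set (f2 := fun n => if Nat.eqb n a then zero else f n).
  assert (E1 : f1 a = f a) by (unfold f1; rewrite Nat.eqb_refl; auto).
  assert (E2 : f2 b = f b) by (unfold f2; destruct (Nat.eqb_spec b a); [congruence|auto]).
  apply (is_series_ext (fun n => plus (f1 n) (f2 n))).
  { intros n; unfold f1, f2; destruct (Nat.eqb_spec n a); [apply plus_zero_r|apply plus_zero_l]. }
  rewrite <- E1, <- E2. apply is_series_plus; apply is_series_pt.
  - intros n Hn; unfold f1; destruct (Nat.eqb_spec n a); congruence.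
  - intros n Hn; unfold f2; destruct (Nat.eqb_spec n a); auto.
Qed.
End Ser.

Lemma is_series_R_pt (f : nat -> R) a : (forall n, n <> a -> f n = 0) -> is_series f (f a).
Proof. apply (@is_series_pt R_AbsRing R_NormedModule). Qed.
Lemma is_series_R_two (f : nat -> R) a b : a <> b ->
  (forall n, n <> a -> n <> b -> f n = 0) -> is_series f (f a + f b).
Proof. apply (@is_series_two R_AbsRing R_NormedModule). Qed.
Lemma is_series_C_pt (f : nat -> C) a : (forall n, n <> a -> f n = RtoC 0) -> is_series f (f a).
Proof. apply (@is_series_pt C_AbsRing C_NormedModule). Qed.
Lemma is_series_C_two (f : nat -> C) a b : a <> b ->
  (forall n, n <> a -> n <> b -> f n = RtoC 0) -> is_series f (Cplus (f a) (f b)).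
Proof. apply (@is_series_two C_AbsRing C_NormedModule). Qed.

Lemma is_series_R_change (f g : nat -> R) s a b : a <> b ->
  (forall n, n <> a -> n <> b -> g n = f n) -> g a + g b = f a + f b ->
  is_series f s -> is_series g s.
Proof.
  intros Hab H E Hf.
  set (d := fun n => g n - f n).
  assert (Hd : is_series d (d a + d b)).
  { apply is_series_R_two; auto. intros n h1 h2; unfold d; rewrite H; auto; ring. }
  replace (d a + d b) with 0 in Hd by (unfold d; lra).
  pose proof (is_series_plus _ _ _ _ Hf Hd) as Hs.
  replace (plus s 0) with s in Hs by (symmetry; apply (@plus_zero_r R_AbelianMonoid)).
  eapply is_series_ext; [|exact Hs]. intros n. change (f n + d n = g n). unfold d; ring.
Qed.

Definition op2 (a b : nat) (x y z t : C) : operator := fun i j =>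
  if Nat.eqb i a then (if Nat.eqb j a then x else if Nat.eqb j b then y else RtoC 0)
  else if Nat.eqb i b then (if Nat.eqb j a then z else if Nat.eqb j b then t else RtoC 0)
  else kdelta i j.

Definition apply2 (a b : nat) (x y z t : C) (v : state) : state := fun i =>
  if Nat.eqb i a then Cplus (Cmult x (v a)) (Cmult y (v b))
  else if Nat.eqb i b then Cplus (Cmult z (v a)) (Cmult t (v b))
  else v i.

Definition blk2 (a b : nat) (n : nat) : nat := if Nat.eqb n b then a else n.

Ltac dest := repeat match goal with |- context [Nat.eqb ?u ?v] => is_var u; is_var v; destruct (Nat.eqb_spec u v) end; subst; try congruence.
Ltac cring := unfold Cconj, Cmult, Cplus, RtoC; apply injective_projections; simpl; ring.
Ltac fin := intros; unfold op2, kdelta, apply2; dest; subst; try congruence; try assumption; try cring.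

Lemma op2_unitary a b x y z t : a <> b ->
  Cplus (Cmult (Cconj x) x) (Cmult (Cconj z) z) = RtoC 1 ->
  Cplus (Cmult (Cconj y) y) (Cmult (Cconj t) t) = RtoC 1 ->
  Cplus (Cmult (Cconj x) y) (Cmult (Cconj z) t) = RtoC 0 ->
  Cplus (Cmult (Cconj y) x) (Cmult (Cconj t) z) = RtoC 0 ->
  Cplus (Cmult x (Cconj x)) (Cmult y (Cconj y)) = RtoC 1 ->
  Cplus (Cmult z (Cconj z)) (Cmult t (Cconj t)) = RtoC 1 ->
  Cplus (Cmult x (Cconj z)) (Cmult y (Cconj t)) = RtoC 0 ->
  Cplus (Cmult z (Cconj x)) (Cmult t (Cconj y)) = RtoC 0 ->
  unitary (op2 a b x y z t).
Proof.
  intros Hab U1 U2 U3 U4 R1 R2 R3 R4. split.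
  { intros j k. set (f := fun i => Cmult (Cconj (op2 a b x y z t i j)) (op2 a b x y z t i k)).
    destruct (Nat.eq_dec j a) as [Ja|Ja]; [|destruct (Nat.eq_dec j b) as [Jb|Jb]].
    3:{ replace (kdelta j k) with (f j) by (unfold f; fin).
        apply is_series_C_pt. unfold f; fin. }
    all: destruct (Nat.eq_dec k a) as [Ka|Ka]; [|destruct (Nat.eq_dec k b) as [Kb|Kb]].
    all: try (replace (kdelta j k) with (f k) by (unfold f; fin);
              apply is_series_C_pt; unfold f; fin).
    all: replace (kdelta j k) with (Cplus (f a) (f b)) by (unfold f; fin);
         apply is_series_C_two; [exact Hab| unfold f; fin]. }
  { intros i k. set (f := fun j => Cmult (op2 a b x y z t i j) (Cconj (op2 a b x y z t k j))).
    destruct (Nat.eq_dec i a) as [Ja|Ja]; [|destruct (Nat.eq_dec i b) as [Jb|Jb]].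
    3:{ replace (kdelta i k) with (f i) by (unfold f; fin).
        apply is_series_C_pt. unfold f; fin. }
    all: destruct (Nat.eq_dec k a) as [Ka|Ka]; [|destruct (Nat.eq_dec k b) as [Kb|Kb]].
    all: try (replace (kdelta i k) with (f k) by (unfold f; fin);
              apply is_series_C_pt; unfold f; fin).
    all: replace (kdelta i k) with (Cplus (f a) (f b)) by (unfold f; fin);
         apply is_series_C_two; [exact Hab| unfold f; fin]. }
Qed.

Lemma op2_stoch a b x y z t : a <> b ->
  Im x = 0 -> Im y = 0 -> Im z = 0 -> Im t = 0 ->
  0 <= Re x -> 0 <= Re y -> 0 <= Re z -> 0 <= Re t ->
  Re x + Re z = 1 -> Re y + Re t = 1 ->
  stochastic_op (op2 a b x y z t).
Proof.
  intros Hab I1 I2 I3 I4 P1 P2 P3 P4 S1 S2. split.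
  { intros i j. unfold op2, kdelta; dest; simpl; split; auto; lra. }
  intros j. set (f := fun i => Re (op2 a b x y z t i j)).
  destruct (Nat.eq_dec j a) as [Ja|Ja]; [|destruct (Nat.eq_dec j b) as [Jb|Jb]].
  3:{ replace 1 with (f j) by (unfold f; fin; simpl; auto).
      apply is_series_R_pt. unfold f; fin; simpl; auto. }
  all: replace 1 with (f a + f b) by (unfold f; fin);
       apply is_series_R_two; [exact Hab| unfold f; fin; simpl; auto].
Qed.

Lemma op2_acts a b x y z t v : a <> b -> acts (op2 a b x y z t) v (apply2 a b x y z t v).
Proof.
  intros Hab i. set (f := fun j => Cmult (op2 a b x y z t i j) (v j)).
  destruct (Nat.eq_dec i a) as [Ja|Ja]; [|destruct (Nat.eq_dec i b) as [Jb|Jb]].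
  3:{ replace (apply2 a b x y z t v i) with (f i) by (unfold f; fin).
      apply is_series_C_pt. unfold f; fin. }
  all: replace (apply2 a b x y z t v i) with (Cplus (f a) (f b)) by (unfold f; fin);
       apply is_series_C_two; [exact Hab| unfold f; fin].
Qed.

Lemma op2_blk a b x y z t : forall i j, blk2 a b i <> blk2 a b j -> op2 a b x y z t i j = RtoC 0.
Proof. intros i j H. revert H. unfold blk2, op2, kdelta. dest; subst; intros; try congruence; try reflexivity. Qed.

Lemma blk_sum_a q a b : a <> b -> block_sum q (blk2 a b) a = q a + q b.
Proof.
  intros Hab. unfold block_sum. apply is_series_unique.
  set (f := fun n => if Nat.eqb (blk2 a b n) a then q n else 0).
  replace (q a + q b) with (f a + f b) by (unfold f, blk2; dest; congruence).
  apply is_series_R_two; auto. unfold f, blk2; intros; dest; congruence.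
Qed.

Lemma blk_sum_c q a b c : c <> a -> c <> b -> block_sum q (blk2 a b) c = q c.
Proof.
  intros Ha Hb. unfold block_sum. apply is_series_unique.
  set (f := fun n => if Nat.eqb (blk2 a b n) c then q n else 0).
  replace (q c) with (f c) by (unfold f, blk2; dest; congruence).
  apply is_series_R_pt; auto. unfold f, blk2; intros; dest; congruence.
Qed.

Lemma step th p a b x y z t v : axiom_A3 th p -> a <> b ->
  allowed_state th v -> allowed_trans th (op2 a b x y z t) ->
  p v a + p v b = p (apply2 a b x y z t v) a + p (apply2 a b x y z t v) b /\
  (forall c, c <> a -> c <> b -> p v c = p (apply2 a b x y z t v) c).
Proof.
  intros H3 Hab Hv HT.
  pose proof (H3 v _ _ Hv HT (op2_acts a b x y z t v Hab) (blk2 a b) (op2_blk a b x y z t)) as E.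
  split.
  - rewrite <- !blk_sum_a by auto. apply E.
  - intros c Ha Hb. rewrite <- (blk_sum_c (p v) a b c), <- (blk_sum_c (p (apply2 a b x y z t v)) a b c) by auto. apply E.
Qed.

Definition sw a b := apply2 a b (RtoC 0) (RtoC 1) (RtoC 1) (RtoC 0).

Lemma sw_val a b v i : sw a b v i = v (if Nat.eqb i a then b else if Nat.eqb i b then a else i).
Proof. unfold sw, apply2. dest; cring. Qed.

Lemma sw_trans th a b : a <> b -> allowed_trans th (op2 a b (RtoC 0) (RtoC 1) (RtoC 1) (RtoC 0)).
Proof.
  intros Hab. destruct th; simpl.
  1,2: apply op2_unitary; auto; cring.
  apply op2_stoch; simpl; auto; lra.
Qed.

Lemma sw_allowed th v a b : a <> b -> allowed_state th v -> allowed_state th (sw a b v).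
Proof.
  intros Hab Hv. destruct th; simpl in *.
  - eapply is_series_R_change; [exact Hab| | |exact Hv].
    + intros n Ha Hb. rewrite sw_val. dest.
    + rewrite !sw_val. dest. ring.
  - destruct Hv as [s [Hs Hv]]. exists s. split; auto.
    eapply is_series_R_change; [exact Hab| | |exact Hv].
    + intros n Ha Hb. rewrite sw_val. dest.
    + rewrite !sw_val. dest. ring.
  - destruct Hv as [Hp Hv]. split.
    + intros n. rewrite sw_val. apply Hp.
    + eapply is_series_R_change; [exact Hab| | |exact Hv].
      * intros n Ha Hb. rewrite sw_val. dest.
      * rewrite !sw_val. dest. ring.
Qed.

Lemma sym th p : prob_rule th p -> axiom_A2 th p -> axiom_A3 th p ->
  forall u a b c, allowed_state th u -> a <> b -> a <> c -> b <> c ->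
  u a = u b -> u c = RtoC 0 -> p u a = p u b.
Proof.
  intros H1 H2 H3 u a b c Hu ab ac bc Eab Ec.
  destruct (step th p a c _ _ _ _ u H3 ac Hu (sw_trans th a c ac)) as [E1 _].
  destruct (step th p b c _ _ _ _ u H3 bc Hu (sw_trans th b c bc)) as [E2 _].
  fold (sw a c u) in E1. fold (sw b c u) in E2.
  assert (Hw1 := sw_allowed th u a c ac Hu).
  destruct (step th p b a _ _ _ _ (sw a c u) H3 (not_eq_sym ab) Hw1 (sw_trans th b a (not_eq_sym ab))) as [_ E3].
  fold (sw b a (sw a c u)) in E3.
  assert (Heq : sw b a (sw a c u) = sw b c u).
  { apply functional_extensionality. intros i. rewrite !sw_val. dest; congruence. }
  rewrite Heq in E3.
  rewrite (H2 u Hu c Ec) in E1, E2.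
  rewrite (H2 (sw a c u) Hw1 a) in E1 by (rewrite sw_val; dest).
  rewrite (H2 (sw b c u) (sw_allowed th u b c bc Hu) b) in E2 by (rewrite sw_val; dest).
  rewrite (E3 c) in E1 by auto. lra.
Qed.

Lemma apply2_a a b x y z t v : apply2 a b x y z t v a = Cplus (Cmult x (v a)) (Cmult y (v b)).
Proof. unfold apply2. rewrite Nat.eqb_refl. auto. Qed.
Lemma apply2_b a b x y z t v : a <> b -> apply2 a b x y z t v b = Cplus (Cmult z (v a)) (Cmult t (v b)).
Proof. intros H. unfold apply2. dest. Qed.
Lemma apply2_c a b x y z t v c : c <> a -> c <> b -> apply2 a b x y z t v c = v c.
Proof. intros. unfold apply2. dest. Qed.

Lemma Cmod_sq (z : C) : Cmod z ^ 2 = fst z ^ 2 + snd z ^ 2.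
Proof. unfold Cmod. rewrite pow2_sqrt; auto. nra. Qed.

Lemma unit_ab a b (a1 a2 be : R) : a <> b -> be * be = 1 - (a1^2 + a2^2) ->
  unitary (op2 a b (a1,a2) (RtoC (- be)) (RtoC be) (Cconj (a1,a2))).
Proof.
  intros Hab hb. apply op2_unitary; auto;
  unfold Cconj, Cmult, Cplus, RtoC; apply injective_projections; simpl; nra.
Qed.

Lemma qsplit v l k m s : l <> m -> v m = RtoC 0 -> Cmod (v l) > Cmod (v k) ->
  is_series (fun n => Cmod (v n) ^ 2) s ->
  exists x y z t, unitary (op2 l m x y z t) /\
    is_series (fun n => Cmod (apply2 l m x y z t v n) ^ 2) s /\
    apply2 l m x y z t v l = v k.
Proof.
  intros Hlm Hm Hlk Hs.
  assert (Hnz : v l <> RtoC 0).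
  { intros E. rewrite E, Cmod_0 in Hlk. pose proof (Cmod_ge_0 (v k)). lra. }
  set (al := Cdiv (v k) (v l)).
  assert (Hal : Cmult al (v l) = v k) by (unfold al; field; auto).
  assert (Hm1 : Cmod al < 1).
  { assert (E : Cmod al * Cmod (v l) = Cmod (v k)) by (rewrite <- Cmod_mult, Hal; auto).
    pose proof (Cmod_ge_0 al). pose proof (Cmod_ge_0 (v k)). nra. }
  clearbody al. destruct al as [a1 a2].
  assert (Hs1 : a1^2 + a2^2 < 1).
  { pose proof (Cmod_sq (a1,a2)) as E. simpl in E. pose proof (Cmod_ge_0 (a1,a2)). nra. }
  set (be := sqrt (1 - (a1^2 + a2^2))).
  assert (hb : be * be = 1 - (a1^2 + a2^2)) by (unfold be; apply sqrt_sqrt; lra).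
  clearbody be.
  exists (a1,a2), (RtoC (- be)), (RtoC be), (Cconj (a1,a2)).
  split; [apply unit_ab; auto|]. split.
  - eapply is_series_R_change; [exact Hlm| | |exact Hs].
    + intros n Ha Hb. rewrite apply2_c; auto.
    + rewrite apply2_a, apply2_b, !Cmod_sq, Hm by auto.
      destruct (v l) as [c1 c2]. simpl. nra.
  - rewrite apply2_a, Hm, Hal. cring.
Qed.

Lemma ssplit v l k m : l <> m -> v m = RtoC 0 -> Cmod (v l) > Cmod (v k) ->
  allowed_state Stochastic v ->
  exists x y z t, stochastic_op (op2 l m x y z t) /\
    allowed_state Stochastic (apply2 l m x y z t v) /\
    apply2 l m x y z t v l = v k.
Proof.
  intros Hlm Hm Hlk [Hp Hs].
  destruct (Hp l) as [Il Pl]. destruct (Hp k) as [Ik Pk].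
  assert (El : v l = RtoC (Re (v l))) by (unfold RtoC; rewrite <- Il; apply surjective_pairing).
  assert (Ek : v k = RtoC (Re (v k))) by (unfold RtoC; rewrite <- Ik; apply surjective_pairing).
  rewrite El, Ek, !Cmod_R, !Rabs_pos_eq in Hlk by auto.
  set (rl := Re (v l)) in *. set (rk := Re (v k)) in *.
  assert (Hrl : 0 < rl) by lra.
  set (al := rk / rl).
  assert (A0 : 0 <= al) by (unfold al; apply Rdiv_le_0_compat; lra).
  assert (A2 : al * rl = rk) by (unfold al; field; lra).
  assert (A1 : al < 1) by nra.
  exists (RtoC al), (RtoC 0), (RtoC (1 - al)), (RtoC 1).
  split; [apply op2_stoch; simpl; auto; lra|]. split; [split|].
  - intros n. destruct (Nat.eq_dec n l) as [->|nl]; [|destruct (Nat.eq_dec n m) as [->|nm]].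
    + rewrite apply2_a, Hm, El. simpl. split; nra.
    + rewrite apply2_b, Hm, El by auto. simpl. split; nra.
    + rewrite apply2_c by auto. apply Hp.
  - eapply is_series_R_change; [exact Hlm| | |exact Hs].
    + intros n Ha Hb. rewrite apply2_c; auto.
    + rewrite apply2_a, apply2_b, Hm by auto. rewrite El at 1 2. simpl. unfold rl. nra.
  - rewrite apply2_a, Hm, El, Ek. unfold RtoC, Cmult, Cplus; simpl. f_equal; nra.
Qed.

Lemma split_ex th v l k m : l <> m -> allowed_state th v -> v m = RtoC 0 -> Cmod (v l) > Cmod (v k) ->
  exists x y z t, allowed_trans th (op2 l m x y z t) /\
    allowed_state th (apply2 l m x y z t v) /\ apply2 l m x y z t v l = v k.
Proof.
  intros Hlm Hv Hm Hlk. destruct th; simpl in *.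
  - exact (qsplit v l k m 1 Hlm Hm Hlk Hv).
  - destruct Hv as [s [Hs Hv]].
    destruct (qsplit v l k m s Hlm Hm Hlk Hv) as (x & y & z & t & A & B & C).
    exists x, y, z, t. split; auto. split; auto. exists s; auto.
  - exact (ssplit v l k m Hlm Hm Hlk Hv).
Qed.

Theorem lemma2 (th : theory) (p : state -> nat -> R) :
  prob_rule th p -> axiom_A2 th p -> axiom_A3 th p ->
  forall v : state, allowed_state th v -> bounded_state v ->
  forall l k : nat, Cmod (v l) > Cmod (v k) -> p v l >= p v k.
Proof.
  intros H1 H2 H3 v Hv [N HN] l k Hlk.
  assert (kl : k <> l) by (intros ->; lra).
  set (m := S (N + l + k)). set (m2 := S m).
  assert (Hm : v m = RtoC 0) by (apply HN; unfold m; lia).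
  assert (Hm2 : v m2 = RtoC 0) by (apply HN; unfold m2, m; lia).
  assert (lm : l <> m) by (unfold m; lia).
  destruct (split_ex th v l k m lm Hv Hm Hlk) as (x & y & z & t & HT & Hw & Hwl).
  set (w := apply2 l m x y z t v) in *.
  destruct (step th p l m x y z t v H3 lm Hv HT) as [E1 E2].
  fold w in E1, E2.
  rewrite (H2 v Hv m Hm) in E1.
  assert (Pm : 0 <= p w m) by (apply (H1 w Hw)).
  rewrite (E2 k) by (unfold m; lia).
  assert (Hwk : w k = v k) by (unfold w; apply apply2_c; unfold m; lia).
  assert (Hwm2 : w m2 = RtoC 0) by (unfold w; rewrite apply2_c; auto; unfold m2, m; lia).
  assert (S : p w l = p w k).
  { apply (sym th p H1 H2 H3 w l k m2 Hw); auto; try (unfold m2, m; lia). congruence. }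
  lra.
Qed.
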